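(* Let $r$ be an ELP rule over atoms $\mathcal{A}$ and epistemic literals $\mathcal{E}$, and let $\Pi_r = (\mathcal{A}, \mathcal{E}, \{ r \})$. Then $r$ is tautological if and only if $\mathcal{SE}_{\Pi_r}(\Phi) = \mathcal{S}_\mathcal{A}$ for each consistent guess $\Phi \subseteq \mathcal{E}$.
   Context: A literal over a set of atoms $\mathcal{A}$ is an atom $a$ or $\neg a$. An interpretation is $I\subseteq\mathcal{A}$; $I\models a$ iff $a\in I$, $I\models\neg\ell$ iff $I\not\models\ell$. A (plain) logic program $(\mathcal{A},\mathcal{R})$ has rules $a_1\vee\cdots\vee a_l \leftarrow a_{l+1},\ldots,a_m,\neg\ell_1,\ldots,\neg\ell_n$ ($\ell_i$ literals); $H(r)$ head, $B(r)$ body, $B^+(r)=\{a_{l+1},\ldots,a_m\}$; $M\models r$ iff $M\models B(r)$ implies $M\cap H(r)\neq\emptyset$; $\mathrm{Mods}(\Pi)$ is the set of models. GL-reduct: $\Pi^I=(\mathcal{A},\{H(r)\leftarrow B^+(r)\mid r\in\mathcal{R},\ I\models\neg\ell\ \forall\neg\ell\in B(r)\})$ ($\neg\neg\neg a$ treated as $\neg a$); answer sets: models $M$ with no $M'\subset M$ a model of $\Pi^M$. An SE-model of $\Pi$ is $(X,Y)$ with $X\subseteq Y\subseteq\mathcal{A}$, $Y\models\Pi$, $X\models\Pi^Y$; $\mathrm{SE}(\Pi)$ the set of SE-models; $\mathcal{S}_\mathcal{A}$ denotes the set of all pairs $(X,Y)$ with $X\subseteq Y\subseteq\mathcal{A}$.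 An ELP is $(\mathcal{A},\mathcal{E},\mathcal{R})$ with $\mathcal{E}$ a set of epistemic literals $\mathbf{not}\,\ell$ and rules (ELP rules) $a_1\vee\cdots\vee a_k\leftarrow \ell_1,\ldots,\ell_m,\xi_1,\ldots,\xi_j,\neg\xi_{j+1},\ldots,\neg\xi_n$, $\xi_i\in\mathcal{E}$. A guess is $\Phi\subseteq\mathcal{E}$; it is consistent iff whenever $\mathcal{E}$ contains both $\mathbf{not}\,a$ and $\mathbf{not}\,\neg a$, $\Phi$ contains at least one of them. $\mathcal{I}$ is $\Phi$-compatible w.r.t. $\mathcal{E}$ iff $\mathcal{I}\neq\emptyset$, every $\mathbf{not}\,\ell\in\Phi$ has some $I\in\mathcal{I}$ with $I\not\models\ell$, and every $\mathbf{not}\,\ell\in\mathcal{E}\setminus\Phi$ has $I\models\ell$ for all $I\in\mathcal{I}$. The epistemic reduct $\Pi^\Phi=(\mathcal{A},\mathcal{R}^\Phi)$ replaces each $\mathbf{not}\,\ell\in\Phi$ by $\top$ and every other $\mathbf{not}$ by $\neg$. $\Phi$ is realizable in $\Pi$ iff some subset of $\mathrm{Mods}(\Pi^\Phi)$ is $\Phi$-compatible. SE-function: $\mathcal{SE}_\Pi(\Phi)=\mathrm{SE}(\Pi^\Phi)$ if $\Phi$ is realizable in $\Pi$, else $\emptyset$. Candidate world views are sets $AS(\Pi^\Phi)$ that are $\Phi$-compatible; world views are those with subset-maximal guess. Two ELPs $\Pi_1,\Pi_2$ are strongly equivalent iff for every ELP $\Pi$, $\Pi_1\cup\Pi$ and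 $\Pi_2\cup\Pi$ (componentwise union) have the same world views. An ELP rule $r$ is tautological iff $\Pi_r=(\mathcal{A},\mathcal{E},\{r\})$ is strongly equivalent to $(\mathcal{A},\mathcal{E},\emptyset)$. *)

(* Defs.v *)
From Stdlib Require List.
From mathcomp Require Import all_boot.
Set Implicit Arguments. Unset Strict Implicit. Unset Printing Implicit Defensive.

Section ELP.
Variable V : eqType.

(* A literal: (true, a) is the atom a, (false, a) is ~a. *)
Definition lit := (bool * V)%type.
Definition LPos (a : V) : lit := (true, a).
Definition LNeg (a : V) : lit := (false, a).

Definition interp := V -> Prop.

Definition lit_sat (I : interp) (l : lit) : Prop :=
  if l.1 then I l.2 else ~ I l.2.

(* the literal "complement": ~(a) = ~a, ~(~a) treated as a (used to render
   ~~~a as ~a in the epistemic reduct) *)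
Definition lit_flip (l : lit) : lit := (~~ l.1, l.2).

(* body elements of plain rules: an atom a, a negated literal ~l (i.e. ~a or
   ~~a), and the constants T and ~T arising in the epistemic reduct *)
Inductive pbelem := PAtom of V | PNot of lit | PTop | PNotTop.

Record prule := PRule { phead : seq V; pbody : seq pbelem }.

Record pprog := PProg { patoms : V -> Prop; prules : prule -> Prop }.

Definition pbelem_sat (I : interp) (e : pbelem) : Prop :=
  match e with
  | PAtom a => I a
  | PNot l => ~ lit_sat I l
  | PTop => True
  | PNotTop => False
  end.

Definition body_sat (I : interp) (b : seq pbelem) : Prop :=
  forall e, List.In e b -> pbelem_sat I e.

Definition prule_sat (I : interp) (r : prule) : Prop :=
  body_sat I (pbody r) -> exists a, List.In a (phead r) /\ I a.

Definition isubset (I J : interp) : Prop := forall a, I a -> J a.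
Definition istrict (I J : interp) : Prop := isubset I J /\ exists a, J a /\ ~ I a.

Definition is_model (P : pprog) (M : interp) : Prop :=
  isubset M (patoms P) /\ forall r, prules P r -> prule_sat M r.

Definition pos_body (b : seq pbelem) : seq V :=
  pmap (fun e => if e is PAtom a then Some a else None) b.

Definition neg_ok (I : interp) (b : seq pbelem) : Prop :=
  forall e, List.In e b ->
    match e with
    | PNot l => ~ lit_sat I l
    | PNotTop => False
    | _ => True
    end.

Definition gl_reduct (P : pprog) (I : interp) : pprog :=
  PProg (patoms P)
    (fun r' => exists r, prules P r /\ neg_ok I (pbody r) /\
                r' = PRule (phead r) (map PAtom (pos_body (pbody r)))).

Definition is_answer_set (P : pprog) (M : interp) : Prop :=
  is_model P M /\ ~ exists M', istrict M' M /\ is_model (gl_reduct P M) M'.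

Definition is_SE (P : pprog) (X Y : interp) : Prop :=
  isubset X Y /\ isubset Y (patoms P) /\ is_model P Y /\ is_model (gl_reduct P Y) X.

(* ELP rules: head, literals l_i, epistemic literals xi_i (positive), and
   epistemic literals under ~ ; the epistemic literal "not l" is represented
   by its literal l. *)
Record erule := ERule { ehead : seq V; elits : seq lit;
                        eeps : seq lit; eneps : seq lit }.

Record elp := ELP { eatoms : seq V; eE : seq lit; erules : seq erule }.

Definition elp_union (P Q : elp) : elp :=
  ELP (eatoms P ++ eatoms Q) (eE P ++ eE Q) (erules P ++ erules Q).

Definition wf_erule (A : seq V) (E : seq lit) (r : erule) : Prop :=
  {subset ehead r <= A} /\ (forall l, l \in elits r -> l.2 \in A) /\
  {subset eeps r <= E} /\ {subset eneps r <= E}.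

Definition wf_elp (P : elp) : Prop :=
  (forall l, l \in eE P -> l.2 \in eatoms P) /\
  forall r, List.In r (erules P) -> wf_erule (eatoms P) (eE P) r.

Definition lit_to_pb (l : lit) : pbelem :=
  if l.1 then PAtom l.2 else PNot (LPos l.2).

Definition ereduct_rule (Phi : seq lit) (r : erule) : prule :=
  PRule (ehead r)
    (map lit_to_pb (elits r)
     ++ map (fun x => if x \in Phi then PTop else PNot x) (eeps r)
     ++ map (fun x => if x \in Phi then PNotTop else PNot (lit_flip x)) (eneps r)).

Definition ereduct (P : elp) (Phi : seq lit) : pprog :=
  PProg (fun a => a \in eatoms P)
        (fun r => exists2 r0, List.In r0 (erules P) & r = ereduct_rule Phi r0).

Definition is_guess (P : elp) (Phi : seq lit) : Prop := {subset Phi <= eE P}.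

Definition consistent_guess (E Phi : seq lit) : Prop :=
  forall a, LPos a \in E -> LNeg a \in E -> (LPos a \in Phi) || (LNeg a \in Phi).

Definition compatible (E Phi : seq lit) (II : interp -> Prop) : Prop :=
  (exists I, II I) /\
  (forall l, l \in Phi -> exists I, II I /\ ~ lit_sat I l) /\
  (forall l, l \in E -> l \notin Phi -> forall I, II I -> lit_sat I l).

Definition realizable (P : elp) (Phi : seq lit) : Prop :=
  exists II : interp -> Prop,
    (forall I, II I -> is_model (ereduct P Phi) I) /\ compatible (eE P) Phi II.

Definition SE_fun (P : elp) (Phi : seq lit) (X Y : interp) : Prop :=
  realizable P Phi /\ is_SE (ereduct P Phi) X Y.

Definition S_pairs (A : seq V) (X Y : interp) : Prop :=
  isubset X Y /\ isubset Y (fun a => a \in A).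

Definition candidate (P : elp) (Phi : seq lit) : Prop :=
  is_guess P Phi /\ compatible (eE P) Phi (is_answer_set (ereduct P Phi)).

Definition guess_strict (Phi Phi' : seq lit) : Prop :=
  {subset Phi <= Phi'} /\ exists x, x \in Phi' /\ x \notin Phi.

Definition world_view (P : elp) (W : interp -> Prop) : Prop :=
  exists Phi, candidate P Phi /\
    (forall Phi', is_guess P Phi' -> guess_strict Phi Phi' -> ~ candidate P Phi') /\
    (forall I, W I <-> is_answer_set (ereduct P Phi) I).

Definition strongly_equiv (P1 P2 : elp) : Prop :=
  forall P, wf_elp P -> forall W,
    world_view (elp_union P1 P) W <-> world_view (elp_union P2 P) W.

Definition tautological (A : seq V) (E : seq lit) (r : erule) : Prop :=
  strongly_equiv (ELP A E [:: r]) (ELP A E [::]).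

End ELP.

(* Main.v *)
Require Import Defs.
From Stdlib Require Import List Classical FunctionalExtensionality PropExtensionality.
From mathcomp Require Import all_boot.
Set Implicit Arguments. Unset Strict Implicit. Unset Printing Implicit Defensive.


Section L.
Variable V : eqType.

Lemma inP (T : eqType) (x : T) (s : seq T) : List.In x s <-> x \in s.
Proof.
elim: s => [|y s IH] /=; first by split => //; rewrite in_nil.
rewrite in_cons; split.
- case=> [->|H]; first by rewrite eqxx.
  by rewrite (proj1 IH H) orbT.
- case/orP=> [/eqP ->|H]; [by left | by right; apply/IH].
Qed.

Definition agree (A : seq V) (I J : interp V) := forall a, a \in A -> (I a <-> J a).

Definition pb_in (A : seq V) (e : pbelem V) : Prop :=
  match e with PAtom a => a \in A | PNot l => l.2 \in A | _ => True end.

Definition ruleA (A : seq V) (r : prule V) : Prop :=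
  (forall a, List.In a (phead r) -> a \in A) /\ (forall e, List.In e (pbody r) -> pb_in A e).

Definition posrule (r : prule V) : prule V :=
  PRule (phead r) (map (@PAtom V) (pos_body (pbody r))).

Lemma lit_sat_agree A I J (l : lit V) : agree A I J -> l.2 \in A -> (lit_sat I l <-> lit_sat J l).
Proof.
move=> H Hl; rewrite /lit_sat; case: l.1; first exact: H.
by split=> Hn Hx; apply: Hn; apply/(H _ Hl).
Qed.

Lemma pbelem_agree A I J e : agree A I J -> pb_in A e -> (pbelem_sat I e <-> pbelem_sat J e).
Proof.
move=> H; case: e => [a|l||] //= Ha; first exact: H.
by have := lit_sat_agree H Ha; tauto.
Qed.

Lemma body_agree A I J b : agree A I J -> (forall e, List.In e b -> pb_in A e) ->
  (body_sat I b <-> body_sat J b).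
Proof.
move=> H Hb; rewrite /body_sat; split=> Hs e He.
- by apply/(pbelem_agree H (Hb e He)); apply: Hs.
- by apply/(pbelem_agree H (Hb e He)); apply: Hs.
Qed.

Lemma neg_ok_agree A I J b : agree A I J -> (forall e, List.In e b -> pb_in A e) ->
  (neg_ok I b <-> neg_ok J b).
Proof.
move=> H Hb; rewrite /neg_ok; split=> Hs e He; move: (Hs e He) (Hb e He);
  case: e He => //= l _ Hn Hl; have := lit_sat_agree H Hl; tauto.
Qed.

Lemma prule_agree A I J r : agree A I J -> ruleA A r -> (prule_sat I r <-> prule_sat J r).
Proof.
move=> H [Hh Hb]; rewrite /prule_sat (body_agree H Hb).
split=> Hs Hbd; case: (Hs Hbd) => a [Ha Ia]; exists a; split => //; by apply/(H _ (Hh _ Ha)).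
Qed.

Lemma agree_sym A I J : agree A I J -> agree A J I.
Proof. by move=> H a Ha; split=> /(H a Ha). Qed.

Lemma pos_body_in A b : (forall e, List.In e b -> pb_in A e) ->
  forall a, List.In a (pos_body b) -> a \in A.
Proof.
elim: b => [|e b IH] //= Hb a.
case: e Hb => [x|l||] Hb /=; try (move=> H; apply: IH => //; by move=> e He; apply: Hb; right).
case=> [<-|H]; first by apply: (Hb (PAtom x)); left.
by apply: IH => // e He; apply: Hb; right.
Qed.

Lemma ruleA_pos A r : ruleA A r -> ruleA A (posrule r).
Proof.
case=> Hh Hb; split=> //= e /in_map_iff [a [<- Ha]] /=.
exact: pos_body_in Hb _ Ha.
Qed.

Lemma body_sat_atoms I (s : seq V) : body_sat I (map (@PAtom V) s) <-> forall a, List.In a s -> I a.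
Proof.
rewrite /body_sat; split=> H a Ha.
- by apply: (H (PAtom a)); apply: in_map.
- by case/in_map_iff: Ha => x [<- Hx] /=; apply: H.
Qed.


Lemma ruleA_reduct A E Phi (r : erule V) : (forall l, l \in E -> l.2 \in A) ->
  wf_erule A E r -> ruleA A (ereduct_rule Phi r).
Proof.
move=> HE [Hh [Hl [He Hn]]]; split=> /=.
- by move=> a /inP /Hh.
- move=> e /in_app_iff [/in_map_iff [l [<- /inP Hin]] | /in_app_iff [] /in_map_iff [x [<- /inP Hin]]].
  + by rewrite /lit_to_pb; case: ifP => _ /=; apply: Hl.
  + by case: ifP => _ //=; apply: HE; apply: He.
  + by case: ifP => _ //=; apply: HE; apply: Hn.
Qed.

Lemma model_ereduct (Q : elp V) Phi M : is_model (ereduct Q Phi) M <->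
  isubset M (fun a => a \in eatoms Q) /\ forall r0, List.In r0 (erules Q) -> prule_sat M (ereduct_rule Phi r0).
Proof.
split=> [[H1 H2]|[H1 H2]]; split=> //.
- by move=> r0 Hr; apply: H2; exists r0.
- by move=> r' [r0 Hr ->]; apply: H2.
Qed.

Lemma glmodel_ereduct (Q : elp V) Phi I M : is_model (gl_reduct (ereduct Q Phi) I) M <->
  isubset M (fun a => a \in eatoms Q) /\ forall r0, List.In r0 (erules Q) -> neg_ok I (pbody (ereduct_rule Phi r0)) ->
    prule_sat M (posrule (ereduct_rule Phi r0)).
Proof.
split=> [[H1 H2]|[H1 H2]]; split=> //.
- move=> r0 Hr Hn; apply: H2; exists (ereduct_rule Phi r0); split; first by exists r0.
  by split.
- move=> r' [rr [[r0 Hr ->] [Hn ->]]]; exact: H2.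
Qed.

Lemma ereduct_rule_ext (E Phi1 Phi2 : seq (lit V)) (r : erule V) :
  {subset eeps r <= E} -> {subset eneps r <= E} ->
  (forall l, l \in E -> (l \in Phi1) = (l \in Phi2)) ->
  ereduct_rule Phi1 r = ereduct_rule Phi2 r.
Proof.
move=> He Hn H; rewrite /ereduct_rule; congr (PRule _ (_ ++ _ ++ _)).
- by apply/eq_in_map => x /He /H ->.
- by apply/eq_in_map => x /Hn /H ->.
Qed.

Lemma ereduct_ext (Q : elp V) (E Phi1 Phi2 : seq (lit V)) :
  (forall r0, List.In r0 (erules Q) -> {subset eeps r0 <= E} /\ {subset eneps r0 <= E}) ->
  (forall l, l \in E -> (l \in Phi1) = (l \in Phi2)) ->
  ereduct Q Phi1 = ereduct Q Phi2.
Proof.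
move=> HQ H; rewrite /ereduct; congr PProg.
apply: functional_extensionality => rr; apply: propositional_extensionality.
split=> -[r0 Hr ->]; exists r0 => //; case: (HQ r0 Hr) => He Hn;
  by rewrite (ereduct_rule_ext He Hn H).
Qed.

End L.


Section B.
Variable V : eqType.
Variables (A : seq V) (E : seq (lit V)) (r : erule V).
Hypothesis wf : wf_elp (ELP A E [:: r]).

Lemma wfE : forall l, l \in E -> l.2 \in A.
Proof. by case: wf. Qed.
Lemma wfr : wf_erule A E r.
Proof. by case: wf => _ H; apply: H; left. Qed.

Hypothesis HR : forall Phi : seq (lit V), {subset Phi <= E} -> consistent_guess E Phi ->
     forall X Y : interp V,
       SE_fun (ELP A E [:: r]) Phi X Y <-> S_pairs A X Y.

Lemma valid_rule (Phi : seq (lit V)) : consistent_guess E Phi ->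
  (forall Y, prule_sat Y (ereduct_rule Phi r)) /\
  (forall X Y, isubset X Y -> neg_ok Y (pbody (ereduct_rule Phi r)) ->
     prule_sat X (posrule (ereduct_rule Phi r))).
Proof.
move=> Hc.
set Phif := [seq x <- Phi | x \in E].
have sub : {subset Phif <= E} by move=> x; rewrite mem_filter => /andP [].
have cf : consistent_guess E Phif.
  move=> a Ha Hb; rewrite !mem_filter Ha Hb /=; exact: Hc.
have eqr : ereduct_rule Phif r = ereduct_rule Phi r.
  case: wfr => _ [_ [He Hn]]; apply: ereduct_rule_ext He Hn _ => l Hl.
  by rewrite mem_filter Hl.
have Hra := ruleA_reduct Phi wfE wfr.
split.
- move=> Y.
  pose Y' := fun a => Y a /\ a \in A.
  have ag : agree A Y Y' by move=> a Ha; rewrite /Y'; tauto.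
  have [_ Hse] : SE_fun (ELP A E [:: r]) Phif Y' Y'.
    by apply/(HR sub cf); split=> // a [].
  case: Hse => _ [_ [[_ Hm] _]].
  apply/(prule_agree ag Hra); rewrite -eqr; apply: Hm; exists r => //; by left.
- move=> X Y sXY Hn.
  pose Y' := fun a => Y a /\ a \in A.
  pose X' := fun a => X a /\ a \in A.
  have agY : agree A Y Y' by move=> a Ha; rewrite /Y'; tauto.
  have agX : agree A X X' by move=> a Ha; rewrite /X'; tauto.
  have [_ Hse] : SE_fun (ELP A E [:: r]) Phif X' Y'.
    apply/(HR sub cf); split; last by move=> a [].
    by move=> a [Ha1 Ha2]; split=> //; apply: sXY.
  case: Hse => _ [_ [_ [_ Hm]]].
  apply/(prule_agree agX (ruleA_pos Hra)); rewrite /posrule -eqr.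
  apply: Hm; exists (ereduct_rule Phif r); split; first by exists r => //; left.
  split=> //; rewrite eqr; exact/(neg_ok_agree agY (proj2 Hra)).
Qed.

Section Q.
Variable P : elp V.
Let Q1 := elp_union (ELP A E [:: r]) P.
Let Q0 := elp_union (ELP A E [::]) P.

Lemma AS_eq Phi : consistent_guess E Phi ->
  forall I, is_answer_set (ereduct Q1 Phi) I <-> is_answer_set (ereduct Q0 Phi) I.
Proof.
move=> Hc; case: (valid_rule Hc) => V1 V2.
have Hm : forall M, is_model (ereduct Q1 Phi) M <-> is_model (ereduct Q0 Phi) M.
  move=> M; rewrite !model_ereduct /=; split=> -[H1 H2]; split=> // r0 Hr.
  - by apply: H2; right.
  - by case: Hr => [<-|Hr]; [apply: V1 | apply: H2].
have Hg : forall M M', isubset M' M -> (is_model (gl_reduct (ereduct Q1 Phi) M) M' <->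
     is_model (gl_reduct (ereduct Q0 Phi) M) M').
  move=> M M' sub; rewrite !glmodel_ereduct /=; split=> -[H1 H2]; split=> // r0 Hr.
  - by apply: H2; right.
  - by case: Hr => [<-|Hr]; [apply: V2 | apply: H2].
move=> I; rewrite /is_answer_set Hm; split=> -[H1 H2]; split=> // -[M' [Hs Hmm]]; apply: H2;
  exists M'; split=> //; apply/(Hg _ _ (proj1 Hs)) => //.
Qed.

Lemma compat_cons (E' Phi : seq (lit V)) II : compatible (E ++ E') Phi II -> consistent_guess E Phi.
Proof.
move=> [[I HI] [_ H3]] a Ha Hb.
case: (boolP (LPos a \in Phi)) => //= H1.
case: (boolP (LNeg a \in Phi)) => //= H2.
have := H3 (LPos a); rewrite mem_cat Ha => /(_ isT H1 I HI).
have := H3 (LNeg a); rewrite mem_cat Hb => /(_ isT H2 I HI).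
by rewrite /lit_sat /=.
Qed.

Lemma compat_ext (E0 Phi : seq (lit V)) (P1 P2 : interp V -> Prop) :
  (forall I, P1 I <-> P2 I) -> compatible E0 Phi P1 -> compatible E0 Phi P2.
Proof.
move=> H [[I HI] [H2 H3]]; split; first by exists I; apply: (proj1 (H I)).
split.
- move=> l Hl; case: (H2 l Hl) => J [HJ HJl]; exists J; split => //; exact: (proj1 (H J)).
- move=> l H1 H1' J HJ; apply: H3 => //; exact: (proj2 (H J)).
Qed.

Lemma cand_eq Phi : candidate Q1 Phi <-> candidate Q0 Phi.
Proof.
rewrite /candidate /=; split=> -[Hg Hc]; split=> //; have cc := compat_cons Hc.
- by apply: compat_ext Hc => I; apply: AS_eq.
- by apply: compat_ext Hc => I; apply: iff_sym; apply: AS_eq.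
Qed.

Lemma wv_eq W : world_view Q1 W <-> world_view Q0 W.
Proof.
split=> -[Phi [Hc [Hmax HW]]]; exists Phi.
- have cc := compat_cons (proj2 Hc).
  split; first by apply/cand_eq.
  split; first by move=> Phi' H1 H2 /cand_eq; apply: Hmax.
  by move=> I; rewrite HW AS_eq.
- have cc := compat_cons (proj2 Hc).
  split; first by apply/cand_eq.
  split; first by move=> Phi' H1 H2 /cand_eq; apply: Hmax.
  by move=> I; rewrite HW AS_eq.
Qed.
End Q.

Lemma taut_of_SE : tautological A E r.
Proof. move=> P _ W; exact: wv_eq. Qed.

End B.


Section C.
Variable V : eqType.

Definition lI (s : seq V) : interp V := fun a => a \in s.

Definition grule (Phi : seq (lit V)) (l : lit V) : erule V :=
  if l \in Phi then ERule [::] [::] [::] [:: l] else ERule [::] [::] [:: l] [::].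

Definition frule (p a : V) : erule V := ERule [:: a] [:: LPos p] [::] [::].
Definition crule (p a c : V) : erule V := ERule [:: a] [:: LPos c; LPos p] [::] [::].

Definition brule (b : V * (seq V * seq V)) : seq (erule V) :=
  map (frule b.1) b.2.1 ++
  flat_map (fun a => flat_map (fun c => if c \in b.2.1 then [::] else [:: crule b.1 a c]) b.2.2) b.2.2.

Definition drule (bs : seq (V * (seq V * seq V))) : erule V := ERule (map fst bs) [::] [::] [::].

Definition ctx (A : seq V) (E Phi : seq (lit V)) (bs : seq (V * (seq V * seq V))) : elp V :=
  ELP (A ++ map fst bs) E (map (grule Phi) E ++ drule bs :: flat_map brule bs).

Lemma brule_in b r0 : List.In r0 (brule b) ->
  (exists a, a \in b.2.1 /\ r0 = frule b.1 a) \/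
  (exists a c, a \in b.2.2 /\ c \in b.2.2 /\ c \notin b.2.1 /\ r0 = crule b.1 a c).
Proof.
case/in_app_iff.
- by case/in_map_iff => a [<- /inP Ha]; left; exists a.
- case/in_flat_map => a [/inP Ha /in_flat_map [c [/inP Hc]]].
  case: ifP => // Hcx [] // <-; right; exists a, c; by rewrite Hcx.
Qed.

Lemma frule_red Phi p a : ereduct_rule Phi (frule p a) = PRule [:: a] [:: PAtom p].
Proof. by []. Qed.
Lemma crule_red Phi p a c : ereduct_rule Phi (crule p a c) = PRule [:: a] [:: PAtom c; PAtom p].
Proof. by []. Qed.
Lemma drule_red Phi bs : ereduct_rule Phi (drule bs) = PRule (map fst bs) [::].
Proof. by []. Qed.
Lemma grule_red Phi Phi' l : ereduct_rule Phi' (grule Phi l) =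
  if l \in Phi then PRule [::] [:: if l \in Phi' then PNotTop V else PNot (lit_flip l)]
  else PRule [::] [:: if l \in Phi' then PTop V else PNot l].
Proof. by rewrite /grule; case: ifP. Qed.

Lemma flip_sat (I : interp V) l : lit_sat I (lit_flip l) <-> ~ lit_sat I l.
Proof.
case: l => [[] a]; rewrite /lit_sat /=; split; try tauto.
all: by move=> H; apply: NNPP.
Qed.

Lemma agree_cons (A s : seq V) p : p \notin A -> agree A (lI s) (lI (p :: s)).
Proof.
move=> Hp a Ha; rewrite /lI in_cons; have -> : (a == p) = false.
  by apply/eqP => E; move: Hp; rewrite -E Ha.
by [].
Qed.

Lemma uniq_fst (bs : seq (V * (seq V * seq V))) b b' :
  uniq (map fst bs) -> b \in bs -> b' \in bs -> b.1 = b'.1 -> b = b'.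
Proof.
elim: bs => [|x bs IH] //= /andP [Hx Hu].
rewrite !in_cons => /orP [/eqP ->|Hb] /orP [/eqP ->|Hb'] // E.
- by move: Hx; rewrite E; move/negP; case; apply: map_f.
- by move: Hx; rewrite -E; move/negP; case; apply: map_f.
- exact: IH.
Qed.

Lemma neg_ok_atoms (I : interp V) s : neg_ok I (map (@PAtom V) s).
Proof. by move=> e /in_map_iff [a [<- _]]. Qed.

End C.


Section D.
Variable V : eqType.
Variables (A : seq V) (E Phis : seq (lit V)) (bs : seq (V * (seq V * seq V))) (R : seq (erule V)).
Hypothesis wfE : forall l, l \in E -> l.2 \in A.
Hypothesis HPhis : {subset Phis <= E}.
Hypothesis Hu : uniq (map fst bs).
Hypothesis Hfresh : forall b, b \in bs -> b.1 \notin A.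
Hypothesis HXY : forall b, b \in bs -> {subset b.2.1 <= b.2.2}.
Hypothesis HYA : forall b, b \in bs -> {subset b.2.2 <= A}.
Hypothesis HR : forall r0, List.In r0 R -> wf_erule A E r0.

Definition Q := elp_union (ELP A E R) (ctx A E Phis bs).

Lemma Q_rules r0 : List.In r0 (erules Q) ->
  List.In r0 R \/ (exists l, l \in E /\ r0 = grule Phis l) \/ r0 = drule bs \/
  exists b, b \in bs /\ List.In r0 (brule b).
Proof.
rewrite /= => /in_app_iff [H|/in_app_iff [H|[H|H]]]; first by left.
- by case/in_map_iff: H => l [<- /inP Hl]; right; left; exists l.
- by right; right; left.
- by case/in_flat_map: H => b [/inP Hb Hr]; right; right; right; exists b.
Qed.

Lemma grule_inQ l : l \in E -> List.In (grule Phis l) (erules Q).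
Proof. by move=> Hl; apply/in_app_iff; right; apply/in_app_iff; left; apply: in_map; apply/inP. Qed.
Lemma drule_inQ : List.In (drule bs) (erules Q).
Proof. by apply/in_app_iff; right; apply/in_app_iff; right; left. Qed.
Lemma brule_inQ b r0 : b \in bs -> List.In r0 (brule b) -> List.In r0 (erules Q).
Proof.
move=> Hb Hr; apply/in_app_iff; right; apply/in_app_iff; right; right.
by apply/in_flat_map; exists b; split => //; apply/inP.
Qed.
Lemma frule_inQ b a : b \in bs -> a \in b.2.1 -> List.In (frule b.1 a) (erules Q).
Proof.
move=> Hb Ha; apply: brule_inQ Hb _; apply/in_app_iff; left; apply: in_map; exact/inP.
Qed.
Lemma crule_inQ b a c : b \in bs -> a \in b.2.2 -> c \in b.2.2 -> c \notin b.2.1 ->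
  List.In (crule b.1 a c) (erules Q).
Proof.
move=> Hb Ha Hc Hcx; apply: brule_inQ Hb _; apply/in_app_iff; right.
apply/in_flat_map; exists a; split; first exact/inP.
apply/in_flat_map; exists c; split; first exact/inP.
by rewrite (negbTE Hcx); left.
Qed.
Lemma R_inQ r0 : List.In r0 R -> List.In r0 (erules Q).
Proof. by move=> H; apply/in_app_iff; left. Qed.

Lemma Q_eps r0 : List.In r0 (erules Q) -> {subset eeps r0 <= E} /\ {subset eneps r0 <= E}.
Proof.
case/Q_rules => [H|[[l [Hl ->]]|[->|[b [Hb H]]]]].
- by case: (HR H) => _ [_ []].
- by rewrite /grule; case: ifP => _; split=> // x; rewrite inE => /eqP ->.
- by [].
- by case/brule_in: H => [[a [_ ->]]|[a [c [_ [_ [_ ->]]]]]].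
Qed.

Lemma constr_sat (I : interp V) e : prule_sat I (PRule [::] [:: e]) <-> ~ pbelem_sat I e.
Proof.
rewrite /prule_sat /body_sat /=; split.
- move=> H He; case: H => [e' [<-|[]]|a [[]]] //.
- move=> H Hb; exfalso; apply: H; apply: Hb; by left.
Qed.

Lemma guess_forced Phi : compatible (eE Q) Phi (is_answer_set (ereduct Q Phi)) ->
  forall l, l \in E -> (l \in Phi) = (l \in Phis).
Proof.
move=> [[I HIas] [_ H3]] l Hl; have HI := proj1 HIas.
have := proj2 (proj1 (model_ereduct _ _ _) HI) _ (grule_inQ Hl).
rewrite grule_red.
case Hs: (l \in Phis); case Hp: (l \in Phi) => //=; rewrite constr_sat /= => Hsat.
- exfalso.
  have Hn : ~ lit_sat I l by apply/flip_sat; apply: NNPP.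
  by apply: Hn; apply: H3 HIas; rewrite /= ?mem_cat ?Hl ?Hp.
- by exfalso; apply: Hsat.
Qed.


Lemma model_C I : is_model (ereduct Q Phis) I -> forall l, l \in E -> l \notin Phis -> lit_sat I l.
Proof.
move=> HI l Hl Hn.
have := proj2 (proj1 (model_ereduct _ _ _) HI) _ (grule_inQ Hl).
by rewrite grule_red (negbTE Hn) constr_sat /= => H; apply: NNPP.
Qed.

Lemma wv_intro : (exists I, is_answer_set (ereduct Q Phis) I) ->
  (forall l, l \in Phis -> exists I, is_answer_set (ereduct Q Phis) I /\ ~ lit_sat I l) ->
  world_view Q (is_answer_set (ereduct Q Phis)).
Proof.
move=> H1 H2; exists Phis; split; last split.
- split; first by move=> x Hx; rewrite /= mem_cat HPhis.
  split=> //; split=> // l; rewrite /= mem_cat orbb => Hl Hn I [HI _].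
  exact: model_C.
- move=> Phi' _ [Hsub [x [Hx Hxn]]] [Hgs Hc].
  have Hg := guess_forced Hc.
  have HxE : x \in E by move: (Hgs x Hx); rewrite /= mem_cat orbb.
  by move: Hxn; rewrite -(Hg x HxE) Hx.
- done.
Qed.

Lemma Q_ext Phi : (forall l, l \in E -> (l \in Phi) = (l \in Phis)) -> ereduct Q Phi = ereduct Q Phis.
Proof. by move=> H; apply: ereduct_ext H => r0 /Q_eps. Qed.

Lemma wv_elim W : world_view Q W ->
  (forall I, W I <-> is_answer_set (ereduct Q Phis) I) /\ compatible (E ++ E) Phis (is_answer_set (ereduct Q Phis)).
Proof.
move=> [Phi [[Hgs Hc] [_ HW]]].
have Hg := guess_forced Hc.
have He := Q_ext Hg.
rewrite He in HW Hc; split=> //.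
case: Hc => [H1 [H2 H3]]; split=> //; split.
- move=> l Hl; apply: H2; rewrite Hg //; exact: HPhis.
- move=> l; rewrite mem_cat orbb => Hl Hn; apply: H3; first by rewrite mem_cat Hl.
  by rewrite Hg.
Qed.

Lemma HRA r0 : List.In r0 R -> ruleA A (ereduct_rule Phis r0).
Proof. by move=> H; apply: ruleA_reduct wfE (HR H). Qed.

Lemma heads_fresh q : q \in map fst bs -> q \notin A.
Proof. by case/mapP => b' Hb' ->; apply: Hfresh. Qed.

Lemma branch_AS b : b \in bs ->
  (forall l, l \in E -> l \notin Phis -> lit_sat (lI b.2.2) l) ->
  (forall r0, List.In r0 R -> prule_sat (lI b.2.2) (ereduct_rule Phis r0)) ->
  ({subset b.2.2 <= b.2.1} \/ exists r0, List.In r0 R /\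
      neg_ok (lI b.2.2) (pbody (ereduct_rule Phis r0)) /\
      ~ prule_sat (lI b.2.1) (posrule (ereduct_rule Phis r0))) ->
  is_answer_set (ereduct Q Phis) (lI (b.1 :: b.2.2)).
Proof.
move=> Hb HC HRs Hmin.
have pA := Hfresh Hb.
have ag := agree_cons b.2.2 pA.
have pin : forall q, q \in map fst bs -> lI (b.1 :: b.2.2) q -> q = b.1.
  move=> q Hq; rewrite /lI in_cons => /orP [/eqP //|Hy].
  by move: (heads_fresh Hq); rewrite (HYA Hb Hy).
have same : forall b', b' \in bs -> b'.1 = b.1 -> b' = b.
  by move=> b' Hb' E'; apply: uniq_fst Hu Hb' Hb E'.
split.
- apply/model_ereduct; split.
  + move=> a; rewrite /lI in_cons => /orP [/eqP ->|Ha]; rewrite /= !mem_cat.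
    * by rewrite (map_f fst Hb) !orbT.
    * by rewrite (HYA Hb Ha).
  + move=> r0 /Q_rules [H|[[l [Hl ->]]|[->|[b' [Hb' H]]]]].
    * by apply/(prule_agree ag (HRA H)); apply: HRs.
    * rewrite grule_red; case Hs: (l \in Phis); rewrite constr_sat /=; first by [].
      move=> Hn; apply: Hn; apply/(lit_sat_agree ag (wfE Hl)); apply: HC => //.
      by rewrite Hs.
    * rewrite drule_red /prule_sat => _; exists b.1; split; first by apply/inP; apply: map_f.
      by rewrite /lI mem_head.
    * case/brule_in: H => [[a [Ha ->]]|[a [c [Ha [Hc [Hcx ->]]]]]].
      - rewrite frule_red /prule_sat => Hbd.
        have Mp : lI (b.1 :: b.2.2) b'.1 by apply: (Hbd (PAtom b'.1)); left.
        have E' := same _ Hb' (pin _ (map_f fst Hb') Mp); subst b'.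
        exists a; split; first by left.
        by rewrite /lI in_cons (HXY Hb Ha) orbT.
      - rewrite crule_red /prule_sat => Hbd.
        have Mp : lI (b.1 :: b.2.2) b'.1 by apply: (Hbd (PAtom b'.1)); right; left.
        have E' := same _ Hb' (pin _ (map_f fst Hb') Mp); subst b'.
        exists a; split; first by left.
        by rewrite /lI in_cons Ha orbT.
- move=> [M' [[Hsub [a [Ma Mna]]] /glmodel_ereduct [_ HM']]].
  have m1 : M' b.1.
    have := HM' _ drule_inQ; rewrite drule_red => /(_ (fun e (H : List.In e [::]) => match H with end)).
    case=> [//|q [/inP Hq Mq]].
    by rewrite -(pin _ Hq (Hsub _ Mq)).
  have m2 : forall x, x \in b.2.1 -> M' x.
    move=> x Hx; have := HM' _ (frule_inQ Hb Hx); rewrite frule_red.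
    move=> /(_ (@neg_ok_atoms V _ [:: b.1])) /=.
    case=> [e [<-|[]] //|x' [[<-|[]] //]].
  have m3 : forall c, c \in b.2.2 -> c \notin b.2.1 -> M' c -> forall y, y \in b.2.2 -> M' y.
    move=> c Hc Hcx Mc y Hy; have := HM' _ (crule_inQ Hb Hy Hc Hcx); rewrite crule_red.
    move=> /(_ (@neg_ok_atoms V _ [:: c; b.1])) /=.
    case=> [e [<-|[<-|[]]] //|x' [[<-|[]] //]].
  have aY : a \in b.2.2.
    move: Ma; rewrite /lI in_cons => /orP [/eqP Ea|//].
    by exfalso; apply: Mna; rewrite Ea.
  have aX : a \notin b.2.1 by apply/negP => /m2.
  have Hno : forall c, c \in b.2.2 -> c \notin b.2.1 -> ~ M' c.
    by move=> c Hc Hcx Mc; apply: Mna; apply: (m3 c Hc Hcx Mc).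
  case: Hmin => [Hs|[r0 [Hr0 [Hneg Hnsat]]]].
  + by move: aX; rewrite (Hs _ aY).
  + apply: Hnsat.
    have ag2 : agree A M' (lI b.2.1).
      move=> c HcA; split=> [Mc|]; last by apply: m2.
      have : lI (b.1 :: b.2.2) c by apply: Hsub.
      rewrite /lI in_cons => /orP [/eqP Ec|HcY].
      * by move: pA; rewrite -Ec HcA.
      * by case: (boolP (c \in b.2.1)) => // Hcx; exfalso; apply: (Hno c).
    apply/(prule_agree (agree_sym ag2) (ruleA_pos (HRA Hr0))).
    apply: HM'; first exact: R_inQ.
    by apply/(neg_ok_agree (agree_sym ag) (proj2 (HRA Hr0))).
Qed.

Lemma branch_notAS b : R = [::] -> b \in bs ->
  (forall l, l \in E -> l \notin Phis -> lit_sat (lI b.2.2) l) ->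
  (exists a, a \in b.2.2 /\ a \notin b.2.1) ->
  ~ is_answer_set (ereduct Q Phis) (lI (b.1 :: b.2.2)).
Proof.
move=> HR0 Hb HC [a [aY aX]] [_ Hmin]; apply: Hmin.
have pA := Hfresh Hb.
have ag := agree_cons b.2.2 pA.
have same : forall b', b' \in bs -> b'.1 = b.1 -> b' = b.
  by move=> b' Hb' E'; apply: uniq_fst Hu Hb' Hb E'.
have pin : forall q, q \in map fst bs -> lI (b.1 :: b.2.1) q -> q = b.1.
  move=> q Hq; rewrite /lI in_cons => /orP [/eqP //|Hy].
  by move: (heads_fresh Hq); rewrite (HYA Hb (HXY Hb Hy)).
exists (lI (b.1 :: b.2.1)); split.
- split.
  + move=> x; rewrite /lI !in_cons => /orP [->//|Hx]; by rewrite (HXY Hb Hx) orbT.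
  + exists a; split; first by rewrite /lI in_cons aY orbT.
    rewrite /lI in_cons (negbTE aX) orbF; move/eqP => Ea.
    by move: pA; rewrite -Ea (HYA Hb aY).
- apply/glmodel_ereduct; split.
  + move=> x; rewrite /lI in_cons => /orP [/eqP ->|Hx]; rewrite /= !mem_cat.
    * by rewrite (map_f fst Hb) !orbT.
    * by rewrite (HYA Hb (HXY Hb Hx)).
  + move=> r0 /Q_rules [H|[[l [Hl ->]]|[->|[b' [Hb' H]]]]].
    * by move: H; rewrite HR0.
    * rewrite grule_red; case Hs: (l \in Phis) => Hn.
      - by exfalso; apply: (Hn (PNotTop V)); left.
      - exfalso; apply: (Hn (PNot l)); first by left.
        apply/(lit_sat_agree ag (wfE Hl)); apply: HC => //; by rewrite Hs.
    * rewrite drule_red /prule_sat => _ _; exists b.1; split; first by apply/inP; apply: map_f.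
      by rewrite /lI mem_head.
    * case/brule_in: H => [[x [Hx ->]]|[x [c [Hx [Hc [Hcx ->]]]]]].
      - rewrite frule_red /= /prule_sat => _ Hbd.
        have Mp : lI (b.1 :: b.2.1) b'.1 by apply: (Hbd (PAtom b'.1)); left.
        have E' := same _ Hb' (pin _ (map_f fst Hb') Mp); subst b'.
        exists x; split; first by left.
        by rewrite /lI in_cons Hx orbT.
      - rewrite crule_red /= /prule_sat => _ Hbd.
        have Mp : lI (b.1 :: b.2.1) b'.1 by apply: (Hbd (PAtom b'.1)); right; left.
        have E' := same _ Hb' (pin _ (map_f fst Hb') Mp); subst b'.
        have Mc : lI (b.1 :: b.2.1) c by apply: (Hbd (PAtom c)); left.
        exfalso; move: Mc; rewrite /lI in_cons (negbTE Hcx) orbF => /eqP Ec.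
        by move: pA; rewrite -Ec (HYA Hb Hc).
Qed.

End D.


Section E1.
Variable V : eqType.

Lemma listifyL (T : eqType) (P : T -> Prop) (s : seq T) : exists t : seq T, forall a, a \in t <-> a \in s /\ P a.
Proof.
elim: s => [|x s [t Ht]]; first by exists [::] => a; rewrite in_nil; split=> // [[]].
case: (classic (P x)) => Px.
- exists (x :: t) => a; rewrite !in_cons; split.
  + case/orP => [/eqP ->|/Ht [H1 H2]]; first by rewrite eqxx.
    by rewrite H1 orbT.
  + case=> /orP [/eqP ->|H1] H2; first by rewrite eqxx.
    by apply/orP; right; apply/Ht.
- exists t => a; rewrite in_cons; split.
  + by case/Ht => H1 H2; rewrite H1 orbT.
  + case=> /orP [/eqP ->|H1] H2 //; by apply/Ht.
Qed.

Hypothesis V_infinite : forall s : seq V, exists v, v \notin s.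

Lemma mk_bs (Bs : seq (seq V * seq V)) (avoid : seq V) :
  exists bs : seq (V * (seq V * seq V)),
    map snd bs = Bs /\ uniq (map fst bs) /\ forall b, b \in bs -> b.1 \notin avoid.
Proof.
elim: Bs => [|B Bs [bs [H1 [H2 H3]]]]; first by exists [::].
case: (V_infinite (avoid ++ map fst bs)) => p; rewrite mem_cat negb_or => /andP [Hp1 Hp2].
exists ((p, B) :: bs); split; first by rewrite /= H1.
split; first by rewrite /= Hp2 H2.
by move=> b; rewrite in_cons => /orP [/eqP ->|/H3].
Qed.

Lemma wf_ctx (A : seq V) (E Phis : seq (lit V)) (bs : seq (V * (seq V * seq V))) :
  (forall l, l \in E -> l.2 \in A) ->
  (forall b, b \in bs -> {subset b.2.1 <= b.2.2}) ->
  (forall b, b \in bs -> {subset b.2.2 <= A}) ->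
  wf_elp (ctx A E Phis bs).
Proof.
move=> wfE HXY HYA; split=> /=.
- by move=> l Hl; rewrite mem_cat wfE.
- move=> r0 /in_app_iff [/in_map_iff [l [<- /inP Hl]]|[H|H]].
  + rewrite /grule; case: ifP => _; split=> //; split=> //; split=> // x; rewrite inE => /eqP -> //.
  + rewrite -H; split=> //=; move=> a Ha; by rewrite mem_cat Ha orbT.
  + case/in_flat_map: H => b [/inP Hb /brule_in [[a [Ha ->]]|[a [c [Ha [Hc [_ ->]]]]]]].
    * split=> /=; first by move=> x; rewrite inE => /eqP ->; rewrite mem_cat (HYA b Hb) ?(HXY b Hb).
      split=> //; move=> l; rewrite inE => /eqP -> /=.
      by rewrite mem_cat (map_f fst Hb) orbT.
    * split=> /=; first by move=> x; rewrite inE => /eqP ->; rewrite mem_cat (HYA b Hb).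
      split=> //; move=> l; rewrite !inE => /orP [] /eqP -> /=; rewrite mem_cat.
      - by rewrite (HYA b Hb).
      - by rewrite (map_f fst Hb) orbT.
Qed.

Definition nb (I : interp V) (e : pbelem V) : Prop :=
  match e with PNot l => ~ lit_sat I l | PNotTop => False | _ => True end.

Lemma body_sat_cat I (b1 b2 : seq (pbelem V)) : body_sat I (b1 ++ b2) <-> body_sat I b1 /\ body_sat I b2.
Proof.
rewrite /body_sat; split.
- by move=> H; split=> e He; apply: H; apply/in_app_iff; [left|right].
- by move=> [H1 H2] e /in_app_iff [] He; [apply: H1|apply: H2].
Qed.

Lemma neg_ok_cat I (b1 b2 : seq (pbelem V)) : neg_ok I (b1 ++ b2) <-> neg_ok I b1 /\ neg_ok I b2.
Proof.
rewrite /neg_ok; split.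
- by move=> H; split=> e He; apply: H; apply/in_app_iff; [left|right].
- by move=> [H1 H2] e /in_app_iff [] He; [apply: H1|apply: H2].
Qed.

Lemma body_sat_map I (T : Type) (f1 f2 : T -> pbelem V) s :
  (forall x, List.In x s -> (pbelem_sat I (f1 x) <-> pbelem_sat I (f2 x))) ->
  (body_sat I (map f1 s) <-> body_sat I (map f2 s)).
Proof.
move=> H; rewrite /body_sat; split=> Hb e /in_map_iff [x [<- Hx]].
- by apply/(H x Hx); apply: Hb; apply: in_map.
- by apply/(H x Hx); apply: Hb; apply: in_map.
Qed.

Lemma neg_ok_map I (T : Type) (f1 f2 : T -> pbelem V) s :
  (forall x, List.In x s -> (nb I (f1 x) <-> nb I (f2 x))) ->
  (neg_ok I (map f1 s) <-> neg_ok I (map f2 s)).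
Proof.
move=> H; rewrite /neg_ok; split=> Hb e /in_map_iff [x [<- Hx]].
- have := Hb _ (in_map f1 _ _ Hx); have := H x Hx; rewrite /nb.
  case: (f1 x); case: (f2 x) => //=; tauto.
- have := Hb _ (in_map f2 _ _ Hx); have := H x Hx; rewrite /nb.
  case: (f1 x); case: (f2 x) => //=; tauto.
Qed.

Lemma pos_body_cat (b1 b2 : seq (pbelem V)) : pos_body (b1 ++ b2) = pos_body b1 ++ pos_body b2.
Proof. by rewrite /pos_body pmap_cat. Qed.

Lemma pos_body_none (T : Type) (f : T -> pbelem V) s :
  (forall x, match f x with PAtom _ => False | _ => True end) -> pos_body (map f s) = [::].
Proof.
move=> H; elim: s => [|x s IH] //=; rewrite /pos_body /=.
by move: (H x); case: (f x) => //.
Qed.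

Lemma posrule_red (Phi : seq (lit V)) r : posrule (ereduct_rule Phi r) =
  PRule (ehead r) (map (@PAtom V) (pos_body (map (@lit_to_pb V) (elits r)))).
Proof.
rewrite /posrule /ereduct_rule /= !pos_body_cat.
rewrite (pos_body_none (f := fun x => if x \in Phi then PTop V else PNot x)); last by move=> x; case: ifP.
rewrite (pos_body_none (f := fun x => if x \in Phi then PNotTop V else PNot (lit_flip x))); last by move=> x; case: ifP.
by rewrite !cats0.
Qed.

Lemma full_of_pos I b : neg_ok I b -> body_sat I (map (@PAtom V) (pos_body b)) -> body_sat I b.
Proof.
move=> Hn /body_sat_atoms Hp e He.
move: (Hn e He); case: e He => //= a Ha _.
apply: Hp; rewrite /pos_body.
elim: b Ha {Hn} => [|e b IH] //= [->|H] /=; first by left.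
by case: e => /= [x|l||]; try (right); try (apply: IH).
Qed.

End E1.


Section F.
Variable V : eqType.
Hypothesis V_infinite : forall s : seq V, exists v, v \notin s.
Variables (A : seq V) (E : seq (lit V)) (r : erule V).
Hypothesis wf : wf_elp (ELP A E [:: r]).
Hypothesis Htaut : tautological A E r.

Let wfE' := wfE wf.
Let wfr' : wf_erule A E r.
Proof. by case: wf => _ H; apply: H; left. Qed.
Let Hra Phi := ruleA_reduct Phi wfE' wfr'.

Let nilR : forall r0, List.In r0 (@nil (erule V)) -> wf_erule A E r0.
Proof. by []. Qed.
Let HR1 : forall r0, List.In r0 [:: r] -> wf_erule A E r0.
Proof. by move=> r0 [<-|[]]; exact: wfr'. Qed.

Let inr : List.In r [:: r] := or_introl erefl.

Lemma realizable_of_compat Phi bs : {subset Phi <= E} ->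
  compatible (E ++ E) Phi (is_answer_set (ereduct (Q A E Phi bs [:: r]) Phi)) ->
  realizable (ELP A E [:: r]) Phi.
Proof.
move=> HPhi [[I0 HI0] [H2 H3]].
pose II := fun J : interp V => exists I, is_answer_set (ereduct (Q A E Phi bs [:: r]) Phi) I /\
   forall a, J a <-> I a /\ a \in A.
have agJ : forall (J I : interp V), (forall a, J a <-> I a /\ a \in A) -> agree A I J.
  by move=> J I HJ a Ha; rewrite HJ; tauto.
exists II; split.
- move=> J [I [HI HJ]]; apply/model_ereduct; split.
  + by move=> a /HJ [].
  + move=> r0 [<-|[]] /=.
    have := proj2 (proj1 (model_ereduct _ _ _) (proj1 HI)) _ (R_inQ A E Phi bs inr).
    exact: (proj1 (prule_agree (agJ J I HJ) (Hra Phi))).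
- split.
  + exists (fun a => I0 a /\ a \in A); exists I0; split => //.
  + split.
    * move=> l Hl; case: (H2 l Hl) => I [HI Hn]; exists (fun a => I a /\ a \in A); split; first by exists I.
      move=> Hs; apply: Hn.
      exact: (proj2 (lit_sat_agree (agJ _ I (fun a => iff_refl _)) (wfE' (HPhi l Hl))) Hs).
    * move=> l Hl Hn J [I [HI HJ]].
      apply: (proj1 (lit_sat_agree (agJ J I HJ) (wfE' Hl))); apply: H3 HI => //.
      by rewrite mem_cat Hl.
Qed.

Lemma realizable_all Phi : {subset Phi <= E} -> consistent_guess E Phi ->
  realizable (ELP A E [:: r]) Phi.
Proof.
move=> HPhi Hc; apply: NNPP => Hnr.
pose K0 := [seq a <- A | (LPos a \in E) && (LPos a \notin Phi)].
pose Kl := fun l : lit V => if l.1 then K0 else l.2 :: K0.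
have K0A : {subset K0 <= A} by move=> a; rewrite mem_filter => /andP [].
have KlA : forall l, l \in Phi -> {subset Kl l <= A}.
  move=> l Hl a; rewrite /Kl; case: ifP => _; first exact: K0A.
  rewrite in_cons => /orP [/eqP ->|/K0A //]; exact: wfE' (HPhi l Hl).
have CK0 : forall l, l \in E -> l \notin Phi -> lit_sat (lI K0) l.
  case=> [[] a] Hl Hn; rewrite /lit_sat /lI /=.
  - by rewrite mem_filter /LPos Hl Hn (wfE' Hl).
  - rewrite mem_filter /LPos => /andP [/andP [H1 H2] _].
    by move: (Hc a H1 Hl); rewrite /LPos /LNeg (negbTE H2) (negbTE Hn).
have CKl : forall l', l' \in Phi -> forall l, l \in E -> l \notin Phi -> lit_sat (lI (Kl l')) l.
  case=> [[] a'] Hl'; rewrite /Kl /=; first exact: CK0.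
  case=> [[] a] Hl Hn; rewrite /lit_sat /lI /=.
  - rewrite in_cons; have := CK0 _ Hl Hn; rewrite /lit_sat /lI /= => ->; by rewrite orbT.
  - rewrite in_cons => /orP [/eqP Ea|].
    + by move: Hn; rewrite Ea Hl'.
    + by have := CK0 _ Hl Hn.
have WK : forall l, l \in Phi -> ~ lit_sat (lI (Kl l)) l.
  case=> [[] a] Hl; rewrite /Kl /lit_sat /lI /=.
  - by rewrite mem_filter /LPos Hl andbF.
  - by rewrite mem_head.
pose Bs := (K0,K0) :: map (fun l => (Kl l, Kl l)) Phi.
case: (mk_bs V_infinite Bs A) => bs [Hsnd [Hu Hfr]].
have Hb2 : forall b, b \in bs -> b.2 = (K0,K0) \/ exists2 l, l \in Phi & b.2 = (Kl l, Kl l).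
  move=> b Hb; have := map_f snd Hb; rewrite Hsnd in_cons => /orP [/eqP ->|/mapP [l Hl ->]].
  - by left.
  - by right; exists l.
have HXY : forall b, b \in bs -> {subset b.2.1 <= b.2.2}.
  by move=> b Hb; case: (Hb2 b Hb) => [->|[l _ ->]].
have HYA : forall b, b \in bs -> {subset b.2.2 <= A}.
  by move=> b Hb; case: (Hb2 b Hb) => [->|[l Hl ->]] //; apply: KlA.
have getb : forall B, B \in Bs -> exists2 b, b \in bs & b.2 = B.
  by move=> B; rewrite -Hsnd => /mapP [b Hb ->]; exists b.
have HAS : forall b, b \in bs -> is_answer_set (ereduct (Q A E Phi bs [::]) Phi) (lI (b.1 :: b.2.2)).
  move=> b Hb; apply: (branch_AS wfE' Hu Hfr HXY HYA nilR Hb).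
  - by case: (Hb2 b Hb) => [->|[l Hl ->]] /=; [exact: CK0 | exact: CKl].
  - by move=> r0 [].
  - by left; case: (Hb2 b Hb) => [->|[l Hl ->]].
have Hwv : world_view (Q A E Phi bs [::]) (is_answer_set (ereduct (Q A E Phi bs [::]) Phi)).
  apply: (wv_intro HPhi).
  - case: (getb (K0,K0) (mem_head _ _)) => b Hb _; exists (lI (b.1 :: b.2.2)); exact: HAS.
  - move=> l Hl; case: (getb (Kl l, Kl l)).
      by rewrite in_cons (map_f (fun l => (Kl l, Kl l)) Hl) orbT.
    move=> b Hb Eb; exists (lI (b.1 :: b.2.2)); split; first exact: HAS.
    move=> Hs; apply: (WK l Hl).
    have := proj2 (lit_sat_agree (agree_cons b.2.2 (Hfr b Hb)) (wfE' (HPhi l Hl))) Hs.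
    by rewrite Eb.
have wfP := wf_ctx Phi wfE' HXY HYA.
have Hwv1 := proj2 (Htaut wfP _) Hwv.
have [_ Hcomp] := wv_elim HPhi HR1 Hwv1.
by apply: Hnr; apply: realizable_of_compat Hcomp.
Qed.

Lemma SE_all Phi : {subset Phi <= E} -> consistent_guess E Phi ->
  forall X Y, S_pairs A X Y -> is_SE (ereduct (ELP A E [:: r]) Phi) X Y.
Proof.
move=> HPhi Hc X Y [sXY sYA].
case: (listifyL (fun x => ~ lit_sat Y x) E) => Dl HDl.
pose Phi' := Phi ++ Dl.
have HPhi' : {subset Phi' <= E} by move=> x; rewrite mem_cat => /orP [/HPhi|/HDl []].
have Hc' : consistent_guess E Phi'.
  move=> a H1 H2; rewrite !mem_cat; by case/orP: (Hc a H1 H2) => ->; rewrite ?orbT.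
have [II [HIIm HIIc]] := realizable_all HPhi' Hc'.
case: (listifyL Y A) => Ys HYs.
case: (listifyL X A) => Xs HXs.
have agY : agree A Y (lI Ys) by move=> a Ha; rewrite /lI HYs; tauto.
have agX : agree A X (lI Xs) by move=> a Ha; rewrite /lI HXs; tauto.
have YsA : {subset Ys <= A} by move=> a /HYs [].
have XsYs : {subset Xs <= Ys}.
  by move=> a /HXs [Ha Xa]; apply/HYs; split => //; apply: sXY.
have CY : forall l, l \in E -> l \notin Phi' -> lit_sat (lI Ys) l.
  move=> l Hl Hn; apply: (proj1 (lit_sat_agree agY (wfE' Hl))).
  apply: NNPP => Hs; move: Hn; rewrite mem_cat negb_or => /andP [_ /negP]; apply.
  by apply/HDl; split.
have gen : forall Ps : seq (lit V), {subset Ps <= E} ->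
    (forall l, l \in Ps -> exists I, II I /\ ~ lit_sat I l) ->
    exists Js : seq (seq V), (forall J, J \in Js -> exists I, II I /\ forall a, a \in J <-> a \in A /\ I a) /\
      (forall l, l \in Ps -> exists2 J, J \in Js & ~ lit_sat (lI J) l).
  elim=> [|l Ps IH] HPs H; first by exists [::].
  case: IH => [x Hx|x Hx|Js [J1 J2]].
  - by apply: HPs; rewrite in_cons Hx orbT.
  - by apply: H; rewrite in_cons Hx orbT.
  case: (H l (mem_head _ _)) => I [HI Hn].
  case: (listifyL I A) => J HJ.
  exists (J :: Js); split.
  - by move=> J'; rewrite in_cons => /orP [/eqP ->|/J1 //]; exists I.
  - move=> l'; rewrite in_cons => /orP [/eqP ->|/J2 [J' HJ' Hn']].
    + exists J; first exact: mem_head.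
      have agIJ : agree A I (lI J) by move=> a Ha; rewrite /lI HJ; tauto.
      move=> Hs; apply: Hn; apply: (proj2 (lit_sat_agree agIJ (wfE' (HPs l (mem_head _ _))))) Hs.
    + by exists J' => //; rewrite in_cons HJ' orbT.
have [Js [HJs1 HJs2]] := gen Phi' HPhi' (proj1 (proj2 HIIc)).
have JA : forall J, J \in Js -> {subset J <= A} by move=> J /HJs1 [I [_ HJ]] a /HJ [].
have Jprops : forall J, J \in Js -> (forall l, l \in E -> l \notin Phi' -> lit_sat (lI J) l) /\
    prule_sat (lI J) (ereduct_rule Phi' r).
  move=> J /HJs1 [I [HI HJ]].
  have agIJ : agree A I (lI J) by move=> a Ha; rewrite /lI HJ; tauto.
  split.
  - move=> l Hl Hn; apply: (proj1 (lit_sat_agree agIJ (wfE' Hl))).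
    case: HIIc => _ [_ H3]; exact: H3 Hl Hn I HI.
  - have := proj2 (proj1 (model_ereduct _ _ _) (HIIm I HI)) r inr.
    exact: (proj1 (prule_agree agIJ (Hra Phi'))).
have build : forall Xl, {subset Xl <= Ys} -> exists bs : seq (V * (seq V * seq V)),
   [/\ uniq (map fst bs), (forall b, b \in bs -> b.1 \notin A),
       (forall b, b \in bs -> {subset b.2.1 <= b.2.2}) & (forall b, b \in bs -> {subset b.2.2 <= A})] /\
       [/\ (forall b, b \in bs -> b.2 = (Xl, Ys) \/ exists2 J, J \in Js & b.2 = (J,J)),
       (exists2 b0, b0 \in bs & b0.2 = (Xl, Ys)) &
       (forall J, J \in Js -> exists2 b, b \in bs & b.2 = (J,J))].
  move=> Xl HXl; pose Bs := (Xl,Ys) :: map (fun J => (J,J)) Js.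
  case: (mk_bs V_infinite Bs A) => bs [Hsnd [Hu Hfr]].
  have Hb2 : forall b, b \in bs -> b.2 = (Xl,Ys) \/ exists2 J, J \in Js & b.2 = (J,J).
    move=> b Hb; have := map_f snd Hb; rewrite Hsnd in_cons => /orP [/eqP ->|/mapP [J HJ ->]].
    + by left.
    + by right; exists J.
  exists bs; split; split => //.
  - by move=> b /Hb2 [->|[J _ ->]].
  - by move=> b /Hb2 [->|[J HJ ->]] //; apply: JA.
  - have : (Xl,Ys) \in map snd bs by rewrite Hsnd mem_head.
    by case/mapP => b Hb Eb; exists b.
  - move=> J HJ; have : (J,J) \in map snd bs.
      by rewrite Hsnd in_cons (map_f (fun J => (J,J)) HJ) orbT.
    by case/mapP => b Hb Eb; exists b.
have mkwv : forall (bs : seq (V * (seq V * seq V))) (R : seq (erule V)), [/\ uniq (map fst bs), (forall b, b \in bs -> b.1 \notin A),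
       (forall b, b \in bs -> {subset b.2.1 <= b.2.2}) & (forall b, b \in bs -> {subset b.2.2 <= A})] ->
     (forall J, J \in Js -> exists2 b, b \in bs & b.2 = (J,J)) ->
     (forall b, b \in bs -> is_answer_set (ereduct (Q A E Phi' bs R) Phi') (lI (b.1 :: b.2.2))) ->
     (exists b, b \in bs) ->
     world_view (Q A E Phi' bs R) (is_answer_set (ereduct (Q A E Phi' bs R) Phi')).
  move=> bs R [Hu Hfr HXY HYA] HJb HAS [b0 Hb0].
  apply: (wv_intro HPhi'); first by exists (lI (b0.1 :: b0.2.2)); apply: HAS.
  move=> l Hl; case: (HJs2 l Hl) => J HJ Hn; case: (HJb J HJ) => b Hb Eb.
  exists (lI (b.1 :: b.2.2)); split; first exact: HAS.
  move=> Hs; apply: Hn.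
  have := proj2 (lit_sat_agree (agree_cons b.2.2 (Hfr b Hb)) (wfE' (HPhi' l Hl))) Hs.
  by rewrite Eb.
have S2a : prule_sat Y (ereduct_rule Phi' r).
  case: (build Ys (fun a h => h)) => bs [[Hu Hfr HXY HYA] [Hb2 [b0 Hb0 Eb0] HJb]].
  have HAS0 : forall b, b \in bs -> is_answer_set (ereduct (Q A E Phi' bs [::]) Phi') (lI (b.1 :: b.2.2)).
    move=> b Hb; apply: (branch_AS wfE' Hu Hfr HXY HYA nilR Hb).
    - by case: (Hb2 b Hb) => [->|[J HJ ->]] /=; [exact: CY | exact: (Jprops J HJ).1].
    - by move=> r0 [].
    - by left; case: (Hb2 b Hb) => [->|[J HJ ->]].
  have Hwv := mkwv bs [::] (And4 Hu Hfr HXY HYA) HJb HAS0 (ex_intro _ b0 Hb0).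
  have Hwv1 := proj2 (Htaut (wf_ctx Phi' wfE' HXY HYA) _) Hwv.
  have [HW _] := wv_elim HPhi' HR1 Hwv1.
  have [/model_ereduct [_ Hm] _] := proj1 (HW _) (HAS0 b0 Hb0).
  have := Hm r (R_inQ A E Phi' bs inr); rewrite Eb0 /=.
  move/(proj2 (prule_agree (agree_cons Ys (Hfr b0 Hb0)) (Hra Phi'))).
  exact: (proj2 (prule_agree agY (Hra Phi'))).
have S2b : neg_ok Y (pbody (ereduct_rule Phi' r)) -> prule_sat X (posrule (ereduct_rule Phi' r)).
  move=> Hneg; apply: NNPP => Hnsat.
  case: (build Xs XsYs) => bs [[Hu Hfr HXY HYA] [Hb2 [b0 Hb0 Eb0] HJb]].
  have HAS1 : forall b, b \in bs -> is_answer_set (ereduct (Q A E Phi' bs [:: r]) Phi') (lI (b.1 :: b.2.2)).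
    move=> b Hb; apply: (branch_AS wfE' Hu Hfr HXY HYA HR1 Hb).
    - by case: (Hb2 b Hb) => [->|[J HJ ->]] /=; [exact: CY | exact: (Jprops J HJ).1].
    - move=> r0 [<-|[]]; case: (Hb2 b Hb) => [->|[J HJ ->]] /=.
      + exact: (proj1 (prule_agree agY (Hra Phi')) S2a).
      + exact: (Jprops J HJ).2.
    - case: (Hb2 b Hb) => [->|[J HJ ->]] /=; last by left.
      right; exists r; split; first by left.
      split; first exact: (proj1 (neg_ok_agree agY (proj2 (Hra Phi'))) Hneg).
      move=> Hs; apply: Hnsat; exact: (proj2 (prule_agree agX (ruleA_pos (Hra Phi'))) Hs).
  have Hwv := mkwv bs [:: r] (And4 Hu Hfr HXY HYA) HJb HAS1 (ex_intro _ b0 Hb0).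
  have Hwv0 := proj1 (Htaut (wf_ctx Phi' wfE' HXY HYA) _) Hwv.
  have [HW _] := wv_elim HPhi' nilR Hwv0.
  apply: (branch_notAS wfE' Hu Hfr HXY HYA (erefl _) Hb0 _ _ (proj1 (HW _) (HAS1 b0 Hb0))).
  - by rewrite Eb0; exact: CY.
  - rewrite Eb0 /=; apply: NNPP => Hne; apply: Hnsat.
    have HYp : prule_sat Y (posrule (ereduct_rule Phi' r)).
      by move=> Hb; apply: S2a; apply: full_of_pos Hneg Hb.
    have agXY : agree A X Y.
      move=> a Ha; split; first exact: sXY.
      move=> Ya; have aYs : a \in Ys by apply/HYs.
      have aXs : a \in Xs by apply: NNPP => /negP H; apply: Hne; exists a.
      by case/HXs: aXs.
    exact: (proj2 (prule_agree agXY (ruleA_pos (Hra Phi'))) HYp).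
have Heps : forall x, x \in E -> x \notin Phi -> x \in Phi' -> ~ lit_sat Y x.
  move=> x Hx Hn; rewrite mem_cat (negbTE Hn) /= => /HDl []; done.
have Hin' : forall x, x \in Phi -> x \in Phi' by move=> x Hx; rewrite mem_cat Hx.
case: wfr' => _ [_ [HeE HnE]].
have Ef : forall x, List.In x (eeps r) ->
   (pbelem_sat Y (if x \in Phi then PTop V else PNot x) <-> pbelem_sat Y (if x \in Phi' then PTop V else PNot x)) /\
   (nb Y (if x \in Phi then PTop V else PNot x) <-> nb Y (if x \in Phi' then PTop V else PNot x)).
  move=> x /inP /HeE Hx; case Hp: (x \in Phi); first by rewrite (Hin' _ Hp).
  case Hp': (x \in Phi') => //=; have := Heps x Hx (negbT Hp) Hp'; tauto.
have Eg : forall x, List.In x (eneps r) ->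
   (pbelem_sat Y (if x \in Phi then PNotTop V else PNot (lit_flip x)) <->
      pbelem_sat Y (if x \in Phi' then PNotTop V else PNot (lit_flip x))) /\
   (nb Y (if x \in Phi then PNotTop V else PNot (lit_flip x)) <->
      nb Y (if x \in Phi' then PNotTop V else PNot (lit_flip x))).
  move=> x /inP /HnE Hx; case Hp: (x \in Phi); first by rewrite (Hin' _ Hp).
  case Hp': (x \in Phi') => //=; have := Heps x Hx (negbT Hp) Hp'; have := flip_sat Y x; tauto.
have E1 : body_sat Y (pbody (ereduct_rule Phi r)) <-> body_sat Y (pbody (ereduct_rule Phi' r)).
  rewrite /= !body_sat_cat (body_sat_map (f1 := fun x => if x \in Phi then PTop V else PNot x)
     (f2 := fun x => if x \in Phi' then PTop V else PNot x)); last by move=> x /Ef [].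
  rewrite (body_sat_map (f1 := fun x => if x \in Phi then PNotTop V else PNot (lit_flip x))
     (f2 := fun x => if x \in Phi' then PNotTop V else PNot (lit_flip x))); last by move=> x /Eg [].
  by [].
have E2 : neg_ok Y (pbody (ereduct_rule Phi r)) -> neg_ok Y (pbody (ereduct_rule Phi' r)).
  rewrite /= !neg_ok_cat (neg_ok_map (f1 := fun x => if x \in Phi then PTop V else PNot x)
     (f2 := fun x => if x \in Phi' then PTop V else PNot x)); last by move=> x /Ef [].
  rewrite (neg_ok_map (f1 := fun x => if x \in Phi then PNotTop V else PNot (lit_flip x))
     (f2 := fun x => if x \in Phi' then PNotTop V else PNot (lit_flip x))); last by move=> x /Eg [].
  by [].
split=> //; split=> //; split.
- apply/model_ereduct; split => //.
  move=> r0 [<-|[]] Hb; exact: S2a (proj1 E1 Hb).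
- apply/glmodel_ereduct; split; first by move=> a /sXY /sYA.
  move=> r0 [<-|[]] Hn; rewrite (posrule_red Phi r) -(posrule_red Phi' r).
  exact: S2b (E2 Hn).
Qed.

End F.


Theorem lemma4 (V : eqType) (V_infinite : forall s : seq V, exists v, v \notin s)
  (A : seq V) (E : seq (lit V)) (r : erule V)
  (wf : wf_elp (ELP A E [:: r])) :
  tautological A E r <->
  (forall Phi : seq (lit V), {subset Phi <= E} -> consistent_guess E Phi ->
     forall X Y : interp V,
       SE_fun (ELP A E [:: r]) Phi X Y <-> S_pairs A X Y).
Proof.
split.
- move=> Ht Phi HPhi Hc X Y; split.
  + by case=> _ [sXY [sYA _]]; split.
  + move=> HS; split.
    * exact: (realizable_all V_infinite wf Ht HPhi Hc).
    * exact: (SE_all V_infinite wf Ht HPhi Hc HS).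
- exact: taut_of_SE wf.
Qed.
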